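(* The family $(f_t)_{t}$, where $t$ runs over all (nonempty) planar rooted trees, is a basis of $\mathrm{Prim}(\mathcal{H})=\{x\in\mathcal{H}:\Delta(x)=x\otimes1+1\otimes x\}$.
   Context: Let $K$ be a field. Planar rooted trees have their children linearly ordered left to right; a planar forest is a finite, possibly empty, sequence $t_1\cdots t_n$ of planar rooted trees ($1$ = empty forest). $\mathcal{H}$ is the free associative unital $K$-algebra on planar rooted trees, with basis the planar forests and product concatenation, graded by weight (number of vertices). $B^+(F)$ is the tree obtained by grafting the trees of $F$ (in order) on a new common root. $\varepsilon(F)=\delta_{F,1}$. $\Delta$ is the unique linear map with $\Delta(1)=1\otimes1$, $\Delta(xy)=(x\otimes1)\Delta(y)+\Delta(x)(1\otimes y)-x\otimes y$, $\Delta(B^+(x))=B^+(x)\otimes 1+(\mathrm{Id}\otimes B^+)\Delta(x)$. $\gamma:\mathcal{H}\to\mathcal{H}$ is linear with $\gamma(t_1\cdots t_n)=\delta_{t_1,\bullet}t_2\cdots t_n$ ($\bullet$ the one-vertex tree) and $\gamma(1)=0$. $\langle-,-\rangle$ is the unique bilinear form on $\mathcal{H}$ with $\langle1,x\rangle=\varepsilon(x)$, $\langle xy,z\rangle=\langle y\otimes x,\Delta(z)\rangle$ (with $\langle a\otimes b,c\otimes d\rangle=\langle a,c\rangle\langle b,d\rangle$) and $\langle B^+(x),y\rangle=\langle x,\gamma(y)\rangle$; it is symmetric, non-degenerate, and forests of different weights are orthogonal. $(f_F)_F$ is the dual basis of the basis of forests: $\langle f_F,G\rangle=\delta_{F,G}$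 for all planar forests $G$. *)

(* Defs.v *)
From HB Require Import structures.
From mathcomp Require Import all_boot all_algebra.
From mathcomp Require Import finmap.
From mathcomp Require Import monalg.

Set Implicit Arguments.
Unset Strict Implicit.
Unset Printing Implicit Defensive.

Import GRing.Theory.
Local Open Scope ring_scope.

Inductive ptree : Type := Node of seq ptree.

Fixpoint ptree_enc (t : ptree) : GenTree.tree unit :=
  let: Node ts := t in GenTree.Node 0 (map ptree_enc ts).

Fixpoint ptree_dec (c : GenTree.tree unit) : ptree :=
  match c with
  | GenTree.Leaf _ => Node [::]
  | GenTree.Node _ cs => Node (map ptree_dec cs)
  end.

Fixpoint ptree_codeK (t : ptree) : ptree_dec (ptree_enc t) = t :=
  match t with
  | Node ts => f_equal Node
      ((fix aux (ts : seq ptree) : map ptree_dec (map ptree_enc ts) = ts :=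
          match ts with
          | [::] => erefl
          | t' :: ts' => f_equal2 cons (ptree_codeK t') (aux ts')
          end) ts)
  end.

HB.instance Definition _ := Countable.copy ptree (can_type ptree_codeK).

(* Planar forests: finite sequences of planar rooted trees; [::] is the empty forest 1. *)
Definition forest := seq ptree.

Definition pdot : ptree := Node [::].

Definition Bplus (F : forest) : ptree := Node F.

Section Hopf.
Variable K : fieldType.

(* H : free vector space with basis the planar forests;
   H (x) H : free vector space with basis the pairs of planar forests. *)
Definition H := {malg K[forest]}.
Definition HH := {malg K[(forest * forest)%type]}.

Definition linH (V : lmodType K) (phi : forest -> V) (x : H) : V :=
  \sum_(F <- msupp x) x@_F *: phi F.

Definition linHH (V : lmodType K) (phi : (forest * forest)%type -> V) (x : HH) : V :=
  \sum_(AB <- msupp x) x@_AB *: phi AB.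

Definition tens (x y : H) : HH :=
  \sum_(F <- msupp x) \sum_(G <- msupp y) (x@_F * y@_G) *: << (F, G) >>.

(* The product of H (x) H: (a (x) b)(c (x) d) = ac (x) bd, concatenation of forests. *)
Definition mulHH (u v : HH) : HH :=
  linHH (fun AB => linHH (fun CD => (<< (AB.1 ++ CD.1, AB.2 ++ CD.2) >> : HH)) v) u.

Definition IdBplus (u : HH) : HH :=
  linHH (fun AB => (<< (AB.1, [:: Bplus AB.2]) >> : HH)) u.

(* Coproduct on basis elements, following the recursive rules
   Delta(1) = 1 (x) 1,
   Delta(t y) = (t (x) 1) Delta(y) + Delta(t) (1 (x) y) - t (x) y,
   Delta(B^+(x)) = B^+(x) (x) 1 + (Id (x) B^+) Delta(x). *)
Fixpoint DeltaT (t : ptree) : HH :=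
  let: Node ts := t in
  let fix DF (ts : seq ptree) : HH :=
      match ts with
      | [::] => << ([::], [::]) >>
      | t' :: ts' => mulHH << ([:: t'], [::]) >> (DF ts')
                     + mulHH (DeltaT t') << ([::], ts') >>
                     - << ([:: t'], ts') >>
      end in
  << ([:: t], [::]) >> + IdBplus (DF ts).

Fixpoint DeltaF (F : forest) : HH :=
  match F with
  | [::] => << ([::], [::]) >>
  | t :: F' => mulHH << ([:: t], [::]) >> (DeltaF F')
               + mulHH (DeltaT t) << ([::], F') >>
               - << ([:: t], F') >>
  end.

Definition Delta (x : H) : HH := linH DeltaF x.

Definition Prim : pred H := fun x => Delta x == tens x << [::] >> + tens << [::] >> x.

Definition epsF (F : forest) : K := (F == [::])%:R.

(* The pairing on basis elements, following the recursive characterisation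
   <1, z> = eps(z), <x y, z> = <y (x) x, Delta z>, <B^+(x), y> = <x, gamma(y)>,
   with gamma(t1...tn) = delta_{t1,o} t2...tn, gamma(1) = 0. *)
Fixpoint pairT (t : ptree) (G : forest) {struct t} : K :=
  let: Node ts := t in
  let fix PF (ts : seq ptree) (G : forest) : K :=
      match ts with
      | [::] => epsF G
      | t' :: ts' =>
          if ts' is [::] then pairT t' G
          else \sum_(AB <- msupp (DeltaF G))
                 (DeltaF G)@_AB * (PF ts' AB.1 * pairT t' AB.2)
      end in
  match G with
  | Node [::] :: G' => PF ts G'
  | _ => 0
  end.

Fixpoint pairF (F : forest) (G : forest) : K :=
  match F with
  | [::] => epsF G
  | t :: F' =>
      if F' is [::] then pairT t G
      else \sum_(AB <- msupp (DeltaF G))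
             (DeltaF G)@_AB * (pairF F' AB.1 * pairT t AB.2)
  end.

Definition pair (x y : H) : K :=
  \sum_(F <- msupp x) \sum_(G <- msupp y) x@_F * y@_G * pairF F G.

End Hopf.

(* Main.v *)
Require Import Defs.
From HB Require Import structures.
From mathcomp Require Import all_boot all_algebra.
From mathcomp Require Import finmap.
From mathcomp Require Import monalg.
From mathcomp Require Import ring zify.
Set Implicit Arguments.
Unset Strict Implicit.
Unset Printing Implicit Defensive.
Import GRing.Theory.
Local Open Scope fset_scope.
Local Open Scope ring_scope.

Section Ev.
Variable K : fieldType.
Variable T : choiceType.
Implicit Types (g : {malg K[T]}) (phi psi : T -> K).

Definition ev_def g phi : K := \sum_(k <- msupp g) g@_k * phi k.
End Ev.
Fact ev_key : unit. Proof. exact: tt. Qed.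
Definition ev (K : fieldType) (T : choiceType) := locked_with ev_key (@ev_def K T).
Lemma evE (K : fieldType) (T : choiceType) (g : {malg K[T]}) phi :
  ev g phi = \sum_(k <- msupp g) g@_k * phi k.
Proof. by rewrite /ev locked_withE. Qed.
Section Ev2.
Variable K : fieldType.
Variable T : choiceType.
Implicit Types (g : {malg K[T]}) (phi psi : T -> K).

Lemma evEw (d : {fset T}) g phi : msupp g `<=` d ->
  ev g phi = \sum_(k <- d) g@_k * phi k.
Proof.
move=> le; rewrite !evE [LHS](big_fset_incl _ le) => //= x xd /mcoeff_outdom ->.
by rewrite mul0r.
Qed.

Lemma evD g1 g2 phi : ev (g1 + g2) phi = ev g1 phi + ev g2 phi.
Proof.
rewrite (@evEw (msupp g1 `|` msupp g2)) ?msuppD_le //.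
rewrite (@evEw (msupp g1 `|` msupp g2) g1) ?fsubsetUl //.
rewrite (@evEw (msupp g1 `|` msupp g2) g2) ?fsubsetUr //.
by rewrite -big_split /=; apply: eq_bigr => k _; rewrite mcoeffD mulrDl.
Qed.

Lemma evZ c g phi : ev (c *: g) phi = c * ev g phi.
Proof.
rewrite (@evEw (msupp g)) ?msuppZ_le // !evE mulr_sumr.
by apply: eq_bigr => k _; rewrite mcoeffZ mulrA.
Qed.

Lemma ev0 phi : ev 0 phi = 0.
Proof. by rewrite !evE msupp0 big_seq_fset0. Qed.

Lemma evN g phi : ev (- g) phi = - ev g phi.
Proof. by rewrite -scaleN1r evZ mulN1r. Qed.

Lemma evB g1 g2 phi : ev (g1 - g2) phi = ev g1 phi - ev g2 phi.
Proof. by rewrite evD evN. Qed.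

Lemma evU c k phi : ev << c *g k >> phi = c * phi k.
Proof. by rewrite (@evEw [fset k]) ?msuppU_le //  big_seq_fset1 mcoeffUU. Qed.

Lemma evU1 k phi : ev << k >> phi = phi k.
Proof. by rewrite evU mul1r. Qed.

Lemma ev_sum (I : Type) (r : seq I) (P : pred I) (F : I -> {malg K[T]}) phi :
  ev (\sum_(i <- r | P i) F i) phi = \sum_(i <- r | P i) ev (F i) phi.
Proof.
by apply: (big_morph (fun g => ev g phi)) => [g1 g2|]; rewrite ?evD ?ev0.
Qed.

Lemma ev_ext g phi psi : phi =1 psi -> ev g phi = ev g psi.
Proof. by move=> e; rewrite !evE; apply: eq_bigr => k _; rewrite e. Qed.

Lemma evfD g phi psi : ev g (fun k => phi k + psi k) = ev g phi + ev g psi.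
Proof. by rewrite !evE -big_split; apply: eq_bigr => k _; rewrite mulrDr. Qed.

Lemma evfN g phi : ev g (fun k => - phi k) = - ev g phi.
Proof. by rewrite !evE -sumrN; apply: eq_bigr => k _; rewrite mulrN. Qed.

Lemma evfB g phi psi : ev g (fun k => phi k - psi k) = ev g phi - ev g psi.
Proof. by rewrite evfD evfN. Qed.

Lemma evfMl c g phi : ev g (fun k => c * phi k) = c * ev g phi.
Proof. by rewrite !evE mulr_sumr; apply: eq_bigr => k _; rewrite mulrCA. Qed.

Lemma evfMr c g phi : ev g (fun k => phi k * c) = ev g phi * c.
Proof. by rewrite !evE mulr_suml; apply: eq_bigr => k _; rewrite mulrA. Qed.

Lemma evf0 g : ev g (fun _ => 0) = 0.
Proof. by rewrite !evE big1 // => k _; rewrite mulr0. Qed.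

Lemma ev_delta g a : ev g (fun k => (a == k)%:R) = g@_a.
Proof.
rewrite [in RHS](monalgE g) raddf_sum !evE; apply: eq_bigr => k _.
by rewrite /= mcoeffU mulr_natr eq_sym.
Qed.


Lemma ev_nz g phi : ev g phi != 0 -> exists2 k, k \in msupp g & phi k != 0.
Proof.
move=> nz; case: (boolP (has (fun k => phi k != 0) (msupp g))).
  by case/hasP => k kin nzk; exists k.
move/hasPn=> H; case/eqP: nz; rewrite !evE big_seq big1 // => k /H.
by rewrite negbK => /eqP ->; rewrite mulr0.
Qed.

End Ev2.

Lemma ev_swap (K : fieldType) (T1 T2 : choiceType) (g : {malg K[T1]}) (h : {malg K[T2]})
  (phi : T1 -> T2 -> K) :
  ev g (fun a => ev h (fun b => phi a b)) = ev h (fun b => ev g (fun a => phi a b)).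
Proof.
rewrite !evE; under eq_bigr do rewrite evE mulr_sumr.
rewrite exchange_big /=; apply: eq_bigr => b _; rewrite evE mulr_sumr.
by apply: eq_bigr => a _; rewrite mulrCA.
Qed.

Lemma ev_lin (K : fieldType) (T1 T2 : choiceType) (u : {malg K[T1]})
  (psi : T1 -> {malg K[T2]}) phi :
  ev (\sum_(k <- msupp u) u@_k *: psi k) phi = ev u (fun k => ev (psi k) phi).
Proof. by rewrite ev_sum evE; apply: eq_bigr => k _; rewrite evZ. Qed.

Section Ind.
Variable Q : forest -> Prop.
Hypothesis Q0 : Q [::].
Hypothesis QS : forall S0 F, Q S0 -> Q F -> Q (Node S0 :: F).
Fixpoint tree_aux (t : ptree) : forall F, Q F -> Q (t :: F) :=
  match t with
  | Node S0 => fun F qF =>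
      @QS S0 F ((fix lf (l : seq ptree) : Q l :=
                 match l with [::] => Q0 | t' :: l' => @tree_aux t' l' (lf l') end) S0) qF
  end.
Fixpoint forest_ind2 (F : forest) : Q F :=
  match F with [::] => Q0 | t :: F' => @tree_aux t F' (forest_ind2 F') end.
End Ind.

Fact de_key : unit. Proof. exact: tt. Qed.
Fact dt_key : unit. Proof. exact: tt. Qed.
Fact p_key : unit. Proof. exact: tt. Qed.
Definition DE (K : fieldType) := locked_with de_key (fun G (phi : forest * forest -> K) => ev (DeltaF K G) phi).
Definition DT (K : fieldType) := locked_with dt_key (fun t (phi : forest * forest -> K) => ev (DeltaT K t) phi).
Definition P (K : fieldType) := locked_with p_key (pairF K).

Fact u_key : unit. Proof. exact: tt. Qed.
Definition U (K : fieldType) (T : choiceType) : T -> {malg K[T]} := locked_with u_key (fun k : T => << k >>).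
Lemma U_E (K : fieldType) (T : choiceType) (k : T) : U K k = << k >>.
Proof. by rewrite /U locked_withE. Qed.
Lemma evUU (K : fieldType) (T : choiceType) (k : T) phi : ev (U K k) phi = phi k.
Proof. by rewrite U_E evU1. Qed.

Fact m_key : unit. Proof. exact: tt. Qed.
Definition MUL (K : fieldType) := locked_with m_key (@mulHH K).
Definition IDB (K : fieldType) := locked_with m_key (@IdBplus K).
Lemma MUL_E (K : fieldType) : @MUL K = @mulHH K. Proof. by rewrite /MUL locked_withE. Qed.
Lemma IDB_E (K : fieldType) : @IDB K = @IdBplus K. Proof. by rewrite /IDB locked_withE. Qed.

Fact e_key : unit. Proof. exact: tt. Qed.
Definition Eps (K : fieldType) := locked_with e_key (epsF K).
Lemma Eps_E (K : fieldType) F : @Eps K F = epsF K F. Proof. by rewrite /Eps locked_withE. Qed.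

Lemma P_EF (K : fieldType) : @P K = pairF K.
Proof. by rewrite /P locked_withE. Qed.

Lemma DE_EF (K : fieldType) : @DE K = fun G phi => ev (DeltaF K G) phi.
Proof. by rewrite /DE locked_withE. Qed.
Lemma DT_EF (K : fieldType) : @DT K = fun t phi => ev (DeltaT K t) phi.
Proof. by rewrite /DT locked_withE. Qed.

Lemma DE_E (K : fieldType) G phi : @DE K G phi = ev (DeltaF K G) phi.
Proof. by rewrite /DE locked_withE. Qed.
Lemma DT_E (K : fieldType) t phi : @DT K t phi = ev (DeltaT K t) phi.
Proof. by rewrite /DT locked_withE. Qed.
Lemma P_E (K : fieldType) F G : @P K F G = pairF K F G.
Proof. by rewrite /P locked_withE. Qed.

Fixpoint wT (t : ptree) : nat :=
  let: Node ts := t in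
  ((fix wl (l : seq ptree) : nat := match l with [::] => 0 | t' :: l' => wT t' + wl l' end) ts).+1.
Fixpoint wF (l : forest) : nat := match l with [::] => 0 | t' :: l' => wT t' + wF l' end.
Lemma wT_node S0 : wT (Node S0) = (wF S0).+1.
Proof. by rewrite /=; congr (_.+1); elim: S0 => //= t l ->. Qed.
Arguments wT : simpl never.

Fixpoint lists (T : Type) (L : seq T) (k : nat) : seq (seq T) :=
  if k is k'.+1 then [::] :: [seq x :: s | x <- L, s <- lists L k'] else [:: [::]].
Fixpoint trees (n : nat) : seq ptree :=
  if n is n'.+1 then [seq Node F | F <- lists (trees n') n'] else [::].

Lemma lists_in (T : eqType) (L : seq T) k (s : seq T) :
  all (mem L) s -> (size s <= k)%N -> s \in lists L k.
Proof.
elim: k s => [|k IH] [|x s] //= /andP[xL sL] hs.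
rewrite in_cons; apply/orP; right; apply/allpairsP; exists (x, s) => /=.
by split => //; apply: IH.
Qed.

Lemma wT_pos t : (0 < wT t)%N. Proof. by case: t => S0; rewrite wT_node. Qed.

Lemma wF_ge (S0 : forest) : (size S0 <= wF S0)%N /\ forall t, t \in S0 -> (wT t <= wF S0)%N.
Proof.
elim: S0 => [|t l [IH1 IH2]] //=; split.
  by have := wT_pos t; lia.
move=> u; rewrite in_cons => /orP[/eqP ->|/IH2]; lia.
Qed.

Lemma trees_in n t : (wT t <= n)%N -> t \in trees n.
Proof.
elim: n t => [|n IH] [S0]; rewrite wT_node // ltnS => h /=.
apply/mapP; exists S0 => //; apply: lists_in.
  case: (wF_ge S0) => _ H2; apply/allP => u uS; apply: IH.
  by have := H2 u uS; lia.
by case: (wF_ge S0) => H1 _; apply: leq_trans H1 h.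
Qed.

Section Hopf.
Variable K : fieldType.
Local Notation E := (@Eps K).
Local Notation DE := (@DE K).
Local Notation DT := (@DT K).
Local Notation P := (@P K).


Lemma ev_mulHH (u v : HH K) phi :
  ev (MUL u v) phi = ev u (fun AB => ev v (fun CD => phi (AB.1 ++ CD.1, AB.2 ++ CD.2))).
Proof.
rewrite MUL_E /mulHH /linHH ev_lin; apply: ev_ext => AB.
by rewrite ev_lin; apply: ev_ext => CD; rewrite evU1.
Qed.

Lemma ev_IdBplus (u : HH K) phi :
  ev (IDB u) phi = ev u (fun AB => phi (AB.1, [:: Node AB.2])).
Proof. by rewrite IDB_E /IdBplus /linHH ev_lin; apply: ev_ext => AB; rewrite evU1. Qed.

Lemma DeltaF_cons t F : DeltaF K (t :: F) =
  MUL (U K ([:: t], [::])) (DeltaF K F) + MUL (DeltaT K t) (U K ([::], F))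
  - U K ([:: t], F).
Proof. by rewrite !U_E MUL_E. Qed.
Lemma DeltaF_nil : DeltaF K [::] = U K ([::], [::]). Proof. by rewrite !U_E. Qed.
Lemma DeltaT_node S0 : DeltaT K (Node S0) = U K ([:: Node S0], [::]) + IDB (DeltaF K S0).
Proof. by rewrite !U_E IDB_E. Qed.

Lemma DE_cons_aux t F (d1 d2 : HH K) phi :
  ev (MUL (U K ([:: t], [::])) d1 + MUL d2 (U K ([::], F)) - U K ([:: t], F)) phi =
  ev d1 (fun CD => phi (t :: CD.1, CD.2)) + ev d2 (fun AB => phi (AB.1, AB.2 ++ F))
  - phi ([:: t], F).
Proof.
rewrite evB evD ev_mulHH ev_mulHH evUU evUU; congr (_ + _ - _).
by apply: ev_ext => AB; rewrite evUU /= cats0.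
Qed.

Lemma DE_nil phi : DE [::] phi = phi ([::], [::]).
Proof. by rewrite DE_E DeltaF_nil evUU. Qed.

Lemma DE_cons t F phi : DE (t :: F) phi =
  DE F (fun CD => phi (t :: CD.1, CD.2)) + DT t (fun AB => phi (AB.1, AB.2 ++ F))
  - phi ([:: t], F).
Proof. rewrite !DE_E DT_E DeltaF_cons; exact: DE_cons_aux. Qed.

Lemma DT_node_aux S0 (d : HH K) phi :
  ev (U K ([:: Node S0], [::]) + IDB d) phi =
  phi ([:: Node S0], [::]) + ev d (fun AB => phi (AB.1, [:: Node AB.2])).
Proof. by rewrite evD evUU ev_IdBplus. Qed.

Lemma DT_node S0 phi : DT (Node S0) phi =
  phi ([:: Node S0], [::]) + DE S0 (fun AB => phi (AB.1, [:: Node AB.2])).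
Proof. rewrite DT_E DE_E DeltaT_node; exact: DT_node_aux. Qed.

Lemma DE_single t phi : DE [:: t] phi = DT t phi.
Proof.
rewrite DE_cons DE_nil /= addrAC subrr add0r.
rewrite !DT_E; apply: ev_ext => -[A B]; by rewrite /= cats0.
Qed.

Lemma DE_ext G phi psi : phi =1 psi -> DE G phi = DE G psi.
Proof. by move=> e; rewrite !DE_E; apply: ev_ext. Qed.
Lemma DT_ext t phi psi : phi =1 psi -> DT t phi = DT t psi.
Proof. by move=> e; rewrite !DT_E; apply: ev_ext. Qed.
Lemma DE_f0 G : DE G (fun _ => 0) = 0.
Proof. by rewrite DE_E evf0. Qed.
Lemma DE_fMl c G phi : DE G (fun k => c * phi k) = c * DE G phi.
Proof. by rewrite !DE_E evfMl. Qed.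
Lemma DE_fMr c G phi : DE G (fun k => phi k * c) = DE G phi * c.
Proof. by rewrite !DE_E evfMr. Qed.
Lemma DE_fD G phi psi : DE G (fun k => phi k + psi k) = DE G phi + DE G psi.
Proof. by rewrite !DE_E evfD. Qed.
Lemma DE_fB G phi psi : DE G (fun k => phi k - psi k) = DE G phi - DE G psi.
Proof. by rewrite !DE_E evfB. Qed.
Lemma DE_swap G H (phi : forest * forest -> forest * forest -> K) :
  DE G (fun a => DE H (fun b => phi a b)) = DE H (fun b => DE G (fun a => phi a b)).
Proof. by rewrite DE_EF /=; apply: ev_swap. Qed.

Lemma E_nil : E [::] = 1. Proof. by rewrite Eps_E /epsF eqxx. Qed.
Lemma E_cons t F : E (t :: F) = 0. Proof. by rewrite Eps_E /epsF. Qed.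

Lemma CL G psi : DE G (fun AB => E AB.1 * psi AB.2) = psi G.
Proof.
elim/forest_ind2: G psi => [psi|S0 F IHS IHF psi]; first by rewrite DE_nil E_nil mul1r.
rewrite DE_cons (@DE_ext _ _ (fun _ => 0)); last by move=> CD; rewrite E_cons mul0r.
rewrite DE_f0 add0r DT_node E_cons mul0r add0r subr0.
rewrite (@DE_ext _ _ (fun AB => E AB.1 * psi (Node AB.2 :: F))) //.
exact: (IHS (fun B => psi (Node B :: F))).
Qed.

Lemma CR G phi : DE G (fun AB => phi AB.1 * E AB.2) = phi G.
Proof.
elim/forest_ind2: G phi => [phi|S0 F IHS IHF phi]; first by rewrite DE_nil E_nil mulr1.
rewrite DE_cons (IHF (fun A => phi (Node S0 :: A))) DT_node /=.
rewrite (@DE_ext _ _ (fun _ => 0)); last by move=> CD; rewrite E_cons mulr0.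
by rewrite DE_f0 addr0 addrK.
Qed.

Lemma P_nil G : P [::] G = E G. Proof. by rewrite P_E Eps_E. Qed.

Lemma P_tree S0 G : P [:: Node S0] G =
  match G with Node [::] :: G' => P S0 G' | _ => 0 end.
Proof.
by case: G => [|[[|? ?] G']]; rewrite !P_E //=.
Qed.

Lemma P_cons t F G : P (t :: F) G = DE G (fun AB => P F AB.1 * P [:: t] AB.2).
Proof.
case: F => [|t' F'].
  by rewrite (@DE_ext _ _ (fun AB => E AB.1 * P [:: t] AB.2)) ?CL // => AB; rewrite P_nil.
rewrite P_EF DE_E evE; apply: eq_bigr => AB _; by [].
Qed.

Lemma P_nilr z : P z [::] = E z.
Proof.
case: z => [|[S0] F]; first by rewrite P_nil.
by rewrite P_cons DE_nil P_tree E_cons mulr0.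
Qed.

Lemma E_tree (S0 : forest) : E S0 = match S0 with [::] => 1 | _ => 0 end.
Proof. by case: S0 => [|? ?]; rewrite ?E_nil ?E_cons. Qed.

Lemma P_treer z T0 : P z [:: Node T0] =
  match z with Node [::] :: z' => P z' T0 | _ => 0 end.
Proof.
case: z => [|[S0] z']; first by rewrite P_nil E_cons.
rewrite P_cons DE_single DT_node /= P_tree /= mulr0 add0r.
rewrite (@DE_ext _ _ (fun AB => E S0 * (P z' AB.1 * E AB.2))); last first.
  move=> -[A B] /=; rewrite P_tree; case: B => [|? ?]; case: S0 => [|? ?];
  by rewrite ?P_nilr ?E_nil ?E_cons ?mulr0 ?mul0r ?mul1r ?mulr1.
by rewrite DE_fMl CR; case: S0 => [|? ?]; rewrite ?E_nil ?E_cons ?mul1r ?mul0r.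
Qed.

Lemma P_consN_B B S0 F' : P [:: Node S0] (Node B :: F') = E B * P S0 F'.
Proof. by rewrite P_tree; case: B => [|? ?]; rewrite ?E_nil ?E_cons ?mul1r ?mul0r. Qed.

Lemma P_consN_Br B z T0 : P (Node B :: z) [:: Node T0] = E B * P z T0.
Proof. by rewrite P_treer; case: B => [|? ?]; rewrite ?E_nil ?E_cons ?mul1r ?mul0r. Qed.

Lemma P_consr z t F' : P z (t :: F') = DE z (fun AB => P AB.1 F' * P AB.2 [:: t]).
Proof.
elim: z t F' => [|s G IH] t F'.
  by rewrite P_nil E_cons DE_nil /= !P_nil E_cons mulr0.
have L1 : DE F' (fun CD => P G (t :: CD.1) * P [:: s] CD.2) =
    DE G (fun CD => P (s :: CD.1) F' * P CD.2 [:: t]).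
  rewrite (@DE_ext _ _ (fun CD => DE G (fun AB => P AB.1 CD.1 * P AB.2 [:: t] * P [:: s] CD.2))); last first.
    by move=> CD; rewrite IH DE_fMr.
  rewrite DE_swap; apply: DE_ext => CD; rewrite P_cons -DE_fMr; apply: DE_ext => AB.
  by rewrite mulrAC.
case: s IH L1 => S0 IH L1; case: t L1 => T0 L1.
have L2 : DT (Node T0) (fun AB => P G AB.1 * P [:: Node S0] (AB.2 ++ F')) =
    P G [:: Node T0] * P [:: Node S0] F' + P G T0 * P S0 F'.
  rewrite DT_node /=; congr (_ + _).
  rewrite (@DE_ext _ _ (fun AB => P G AB.1 * E AB.2 * P S0 F')); last first.
    by move=> AB; rewrite /= P_consN_B mulrA.
  by rewrite DE_fMr (CR _ (P G)).
have L3 : DT (Node S0) (fun AB => P AB.1 F' * P (AB.2 ++ G) [:: Node T0]) =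
    P [:: Node S0] F' * P G [:: Node T0] + P S0 F' * P G T0.
  rewrite DT_node /=; congr (_ + _).
  rewrite (@DE_ext _ _ (fun AB => P AB.1 F' * E AB.2 * P G T0)); last first.
    by move=> AB; rewrite /= P_consN_Br mulrA.
  by rewrite DE_fMr (CR _ (fun A => P A F')).
rewrite P_cons DE_cons DE_cons L1 L2 L3.
rewrite /=; set X := DE G _.
set a := P G [:: Node T0]; set b := P [:: Node S0] F'; set c := P G T0; set d := P S0 F'.
by rewrite (mulrC b a) (mulrC d c).
Qed.

Lemma P_sym x y : P x y = P y x.
Proof.
elim/forest_ind2: x y => [y|S0 F IHS IHF y]; first by rewrite P_nil P_nilr.
have T : forall y, P [:: Node S0] y = P y [:: Node S0].
  by move=> y'; rewrite P_tree P_treer; case: y' => [|[[|? ?] ?]] //.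
rewrite P_cons P_consr; apply: DE_ext => AB; by rewrite IHF T.
Qed.

Lemma DE_cat G F phi : DE (G ++ F) phi =
  DE F (fun AB => phi (G ++ AB.1, AB.2)) + DE G (fun AB => phi (AB.1, AB.2 ++ F)) - phi (G, F).
Proof.
elim: G phi => [|t G IH] phi.
  rewrite DE_nil /= addrK; apply: DE_ext => -[A B] //.
rewrite cat_cons DE_cons (IH (fun CD => phi (t :: CD.1, CD.2))) DE_cons.
rewrite (@DT_ext t (fun AB => phi (AB.1, (AB.2 ++ G) ++ F)) (fun AB => phi (AB.1, AB.2 ++ G ++ F)));
  last by move=> AB; rewrite catA.
rewrite /=; ring.
Qed.

Lemma P_cat_split S0 B F : P [:: Node S0] (B ++ F) =
  E B * P [:: Node S0] F + match B with Node [::] :: B' => P S0 (B' ++ F) | _ => 0 end.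
Proof.
case: B => [|[[|? ?] B']]; rewrite ?E_nil ?E_cons ?mul1r ?mul0r ?addr0 ?add0r //=.
by rewrite P_tree.
by rewrite P_tree.
Qed.

Lemma DE_dual z F G : DE z (fun AB => P AB.1 F * P AB.2 G) = P z (G ++ F).
Proof.
elim/forest_ind2: z F G => [F G|S0 Gz IHS IHG F G].
  rewrite DE_nil /= !P_nil.
  by case: G => [|? ?]; case: F => [|? ?]; rewrite ?E_nil ?E_cons ?mul1r ?mul0r ?mulr0.
set Ga := fun B : forest => match B with Node [::] :: B' => P S0 (B' ++ F) | _ => 0 end.
have M1 : DE Gz (fun CD => P (Node S0 :: CD.1) F * P CD.2 G) =
          DE F (fun AB => P Gz (G ++ AB.1) * P [:: Node S0] AB.2).
  rewrite (@DE_ext F _ (fun AB => DE Gz (fun CD => P CD.1 AB.1 * P CD.2 G * P [:: Node S0] AB.2)));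
    last by move=> AB; rewrite -IHG DE_fMr.
  rewrite DE_swap; apply: DE_ext => CD; rewrite P_cons -DE_fMr; apply: DE_ext => AB.
  by rewrite mulrAC.
have M2 : DT (Node S0) (fun AB => P AB.1 F * P (AB.2 ++ Gz) G) =
          P [:: Node S0] F * P Gz G + DE G (fun AB => P Gz AB.1 * Ga AB.2).
  rewrite DT_node /=; congr (_ + _).
  rewrite (@DE_ext S0 _ (fun AB => DE G (fun CD => P Gz CD.1 * (P AB.1 F * P [:: Node AB.2] CD.2))));
    last first.
    by move=> AB; rewrite /= P_cons -DE_fMl; apply: DE_ext => CD; rewrite mulrCA.
  rewrite DE_swap; apply: DE_ext => CD; rewrite DE_fMl; congr (_ * _).
  rewrite /Ga; case: CD => C D /=; case: D => [|[[|? ?] D']].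
  - by rewrite (@DE_ext _ _ (fun _ => 0)) ?DE_f0 // => AB; rewrite P_tree mulr0.
  - by rewrite (@DE_ext _ _ (fun AB => P AB.1 F * P AB.2 D')) ?IHS // => AB; rewrite P_tree.
  - by rewrite (@DE_ext _ _ (fun _ => 0)) ?DE_f0 // => AB; rewrite P_tree mulr0.
have M3 : DE G (fun AB => P Gz AB.1 * P [:: Node S0] (AB.2 ++ F)) =
          P Gz G * P [:: Node S0] F + DE G (fun AB => P Gz AB.1 * Ga AB.2).
  rewrite (@DE_ext G _ (fun AB => P Gz AB.1 * E AB.2 * P [:: Node S0] F + P Gz AB.1 * Ga AB.2));
    last by move=> AB; rewrite P_cat_split mulrDr mulrA.
  by rewrite DE_fD DE_fMr (CR _ (P Gz)).
rewrite DE_cons M1 M2 (P_cons (Node S0) Gz (G ++ F)) DE_cat M3.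
rewrite /=; ring.
Qed.

Lemma DE_weight G phi : (forall A B, (wF A + wF B)%N = wF G -> phi (A, B) = 0) -> DE G phi = 0.
Proof.
elim/forest_ind2: G phi => [phi|S0 F IHS IHF phi] H0; first by rewrite DE_nil H0.
rewrite DE_cons DT_node /= IHF; last first.
  by move=> A B hAB; apply: H0; rewrite /= -hAB addnA.
rewrite IHS; last first.
  move=> A B hAB; apply: H0; rewrite /= !wT_node; lia.
rewrite H0; last by rewrite /= ?cats0 !wT_node; lia.
by rewrite add0r addr0 subrr.
Qed.

Lemma P_weight F G : wF F != wF G -> P F G = 0.
Proof.
elim/forest_ind2: F G => [G|S0 F IHS IHF G] hw.
  by rewrite P_nil; case: G hw => [|? ?]; rewrite ?E_cons.
have T : forall B, wT (Node S0) != wF B -> P [:: Node S0] B = 0.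
  move=> B; rewrite P_tree; case: B => [|[[|? ?] B']] // hB; apply: IHS.
  move: hB; rewrite /= !wT_node /=; lia.
rewrite P_cons; apply: DE_weight => A B hAB /=.
have [e|ne] := eqVneq (wF F) (wF A); last by rewrite IHF // mul0r.
rewrite T ?mulr0 //; move: hw; rewrite /= -hAB e; lia.
Qed.

Lemma pairE (x y : H K) : pair x y = ev x (fun F => ev y (fun G => P F G)).
Proof.
rewrite /pair evE; apply: eq_bigr => F _; rewrite evE mulr_sumr.
by apply: eq_bigr => G _; rewrite P_E mulrA.
Qed.

Lemma pairUr (x : H K) G : pair x << G >> = ev x (fun F => P F G).
Proof. by rewrite pairE; apply: ev_ext => F; rewrite evU1. Qed.

Lemma pairUl F (y : H K) : pair << F >> y = ev y (fun G => P F G).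
Proof. by rewrite pairE evU1. Qed.

Lemma ev_Delta (x : H K) phi : ev (Delta x) phi = ev x (fun G => DE G phi).
Proof. by rewrite /Delta /linH ev_lin; apply: ev_ext => G; rewrite DE_E. Qed.

Lemma ev_tens (x y : H K) phi : ev (tens x y) phi = ev x (fun F => ev y (fun G => phi (F, G))).
Proof.
rewrite /tens ev_sum evE; apply: eq_bigr => F _; rewrite ev_sum evE mulr_sumr.
by apply: eq_bigr => G _; rewrite evZ evU1 mulrA.
Qed.

Lemma hfP (f : forest -> H K) (hf : forall F G, pair (f F) << G >> = (F == G)%:R) A C :
  ev (f A) (fun F => P C F) = (A == C)%:R.
Proof.
by rewrite (@ev_ext _ _ (f A) _ (fun F => P F C)) ?pairUr ?hf -?pairUr ?hf // => F; rewrite P_sym.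
Qed.

Lemma extract (f : forest -> H K) (hf : forall F G, pair (f F) << G >> = (F == G)%:R)
  (w1 w2 : HH K) :
  (forall F G, ev w1 (fun CD => P CD.1 F * P CD.2 G) = ev w2 (fun CD => P CD.1 F * P CD.2 G)) ->
  w1 = w2.
Proof.
move=> e; apply/malgP => -[A B].
have key : forall w : HH K, w@_(A, B) =
    ev (f A) (fun F => ev (f B) (fun G => ev w (fun CD => P CD.1 F * P CD.2 G))).
  move=> w; rewrite -ev_delta.
  rewrite (@ev_ext _ _ w _ (fun CD => ev (f A) (fun F => ev (f B) (fun G => P CD.1 F * P CD.2 G))));
    last first.
    move=> [C D] /=; rewrite (@ev_ext _ _ (f A) _ (fun F => P C F * ev (f B) (fun G => P D G))); last first.
      by move=> F; rewrite evfMl.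
    rewrite evfMr (hfP hf A C) (hfP hf B D).
    by rewrite xpair_eqE; case: (A == C); case: (B == D); rewrite ?mulr1 ?mulr0 ?mul0r.
  rewrite ev_swap; apply: ev_ext => F; exact: ev_swap.
by rewrite !key; apply: ev_ext => F; apply: ev_ext => G; apply: e.
Qed.

Lemma prim_f (f : forest -> H K) (hf : forall F G, pair (f F) << G >> = (F == G)%:R) t :
  Delta (f [:: t]) = tens (f [:: t]) << [::] >> + tens << [::] >> (f [:: t]).
Proof.
apply: (extract hf) => F G.
rewrite ev_Delta evD !ev_tens.
rewrite (@ev_ext _ _ (f [:: t]) _ (fun H => P H (G ++ F))); last by move=> H0; rewrite DE_dual.
rewrite -pairUr hf.
rewrite (@ev_ext _ _ (f [:: t]) _ (fun C => P C F * P [::] G)); last by move=> C; rewrite evU1.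
rewrite evU1 /= evfMr evfMl -!pairUr !hf !P_nil.
have n0 : ([:: t] == [::]) = false by [].
case: G => [|g G'].
  by rewrite E_nil n0 mulr1 mulr0 addr0.
rewrite E_cons mulr0 add0r cat_cons.
case: F => [|h F'].
  by rewrite E_nil mul1r cats0.
rewrite E_cons mul0r eqseq_cons; case: G' => [|? ?] /=; by rewrite andbF.
Qed.

Lemma sum_delta (s : seq ptree) (c : ptree -> K) t0 : uniq s ->
  \sum_(t <- s) c t * ([:: t] == [:: t0])%:R = if t0 \in s then c t0 else 0.
Proof.
move=> us; case: ifP => h.
  rewrite (bigD1_seq t0) //= eqxx mulr1 big1 ?addr0 // => i /negbTE ne.
  by rewrite eqseq_cons ne mulr0.
rewrite big_seq big1 // => i ins; rewrite eqseq_cons.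
have -> : (i == t0) = false by apply/eqP => e; rewrite -e ins in h.
by rewrite mulr0.
Qed.

Lemma sum_notree (s : seq ptree) (c : ptree -> K) F :
  (forall t, F != [:: t]) -> \sum_(t <- s) c t * ([:: t] == F)%:R = 0.
Proof.
move=> nt; rewrite big1 // => t _.
have -> : ([:: t] == F) = false.
  by apply/eqP => e; move: (nt t); rewrite -e eqxx.
by rewrite mulr0.
Qed.

Lemma span_prim (f : forest -> H K) (hf : forall F G, pair (f F) << G >> = (F == G)%:R)
  (x : H K) : Delta x = tens x << [::] >> + tens << [::] >> x ->
  exists (s : seq ptree) (c : ptree -> K), x = \sum_(t <- s) c t *: f [:: t].
Proof.
move=> hx.
have hprim : forall phi, ev x (fun G => DE G phi) =
    ev x (fun F => phi (F, [::])) + ev x (fun G => phi ([::], G)).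
  move=> phi; rewrite -ev_Delta hx evD !ev_tens; congr (_ + _).
    by apply: ev_ext => F; rewrite evU1.
  by rewrite evU1.
set pi := fun F => ev x (fun G => P F G).
have pi0 : pi [::] = 0.
  have := hprim (fun AB => E AB.1 * E AB.2).
  rewrite (@ev_ext _ _ x _ E); last by move=> G; rewrite CL.
  rewrite /= E_nil.
  rewrite (@ev_ext _ _ x (fun F => E F * 1) E); last by move=> F; rewrite mulr1.
  rewrite (@ev_ext _ _ x (fun F => 1 * E F) E); last by move=> F; rewrite mul1r.
  move=> e; rewrite /pi (@ev_ext _ _ x _ E); last by move=> G; rewrite P_nil.
  by apply/eqP; rewrite -(addrI _ (etrans (addr0 _) e)).
have pi2 : forall t F', F' != [::] -> pi (t :: F') = 0.
  move=> t F' nF; rewrite /pi.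
  rewrite (@ev_ext _ _ x _ (fun G => DE G (fun AB => P F' AB.1 * P [:: t] AB.2))); last first.
    by move=> G; rewrite P_cons.
  rewrite hprim /= !P_nilr.
  have -> : E F' = 0 by case: F' nF => [|? ?]; rewrite ?E_cons.
  rewrite E_cons (@ev_ext _ _ x _ (fun _ => 0)) ?evf0 ?add0r; last by move=> F; rewrite mulr0.
  by rewrite (@ev_ext _ _ x _ (fun _ => 0)) ?evf0 // => F; rewrite mul0r.
pose n := \max_(G <- msupp x) wF G.
pose s := undup (trees n).
pose c := fun t => pi [:: t].
have cs : forall t, t \notin s -> c t = 0.
  move=> t; rewrite mem_undup => nts; apply/eqP; apply: contraR nts => /ev_nz[G Gin PG].
  apply: trees_in.
  have : wF [:: t] = wF G by apply/eqP; apply: contraR PG => ne; rewrite P_weight.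
  rewrite /= addn0 => ->.
  exact: (@leq_bigmax_seq _ _ xpredT (fun G => wF G) _ Gin).
exists s, c.
set y := \sum_(t <- s) c t *: f [:: t].
apply/eqP; rewrite -subr_eq0; apply/eqP; apply/malgP => A.
have dF : forall F, ev (x - y) (fun G => P F G) = 0.
  move=> F; rewrite evB ev_sum.
  rewrite (eq_bigr (fun t => c t * ([:: t] == F)%:R)); last first.
    by move=> t _; rewrite evZ hfP.
  rewrite -/(pi F).
  case: F => [|t0 [|t1 F']].
  - by rewrite pi0 sum_notree ?subr0.
  - rewrite sum_delta ?undup_uniq //; case: ifP => h; first by rewrite /c subrr.
    by rewrite subr0; have := cs t0; rewrite h; apply.
  - rewrite (pi2 t0 (t1 :: F')) // sum_notree ?subr0 // => t.
    by rewrite eqseq_cons andbF.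
rewrite mcoeff0 -ev_delta.
rewrite (@ev_ext _ _ (x - y) _ (fun G => ev (f A) (fun F => P F G))); last first.
  by move=> G; rewrite -pairUr hf.
rewrite ev_swap (@ev_ext _ _ (f A) _ (fun _ => 0)) ?evf0 //.
Qed.

End Hopf.

Unset Implicit Arguments.

Theorem proposition22 (K : fieldType) (f : forest -> H K) :
  (* (f_F)_F is the dual basis of the basis of forests for <-,-> *)
  (forall F G : forest, pair (f F) << G >> = (F == G)%:R) ->
  [/\ (* each f_t (t a tree) is primitive *)
      forall t : ptree, f [:: t] \in @Prim K,
      (* the f_t are linearly independent *)
      forall (s : seq ptree) (c : ptree -> K), uniq s ->
        \sum_(t <- s) c t *: f [:: t] = 0 -> forall t, t \in s -> c t = 0
    & (* the f_t span Prim(H) *)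
      forall x : H K, x \in @Prim K ->
        exists (s : seq ptree) (c : ptree -> K), x = \sum_(t <- s) c t *: f [:: t]].
Proof.
move=> hf; split.
- move=> t; rewrite unfold_in /Prim; apply/eqP; exact: prim_f hf t.
- move=> s c us hs t ts.
  have := congr1 (fun z => pair z << [:: t] >>) hs.
  rewrite /= !pairUr ev0 ev_sum.
  rewrite (eq_bigr (fun u => c u * ([:: u] == [:: t])%:R)); last first.
    by move=> u _; rewrite evZ -pairUr hf.
  by rewrite sum_delta // ts.
- by move=> x; rewrite unfold_in /Prim => /eqP; apply: span_prim hf x.
Qed.
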